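(* For all integers $m,n\ge 0$, $$\frac{1}{n!}D_{m+n}=\sum_{l=0}^{n}\sum_{k=0}^{m}\binom{k+n-l-1}{n-l}\binom{m}{k}(-1)^{m-k}\frac{k!}{l!}\,D_l,$$ where $D_j$ denotes the $j$-th derangement number.
   Context: For a nonnegative integer $j$, the derangement number is $D_j=j!\sum_{i=0}^{j}\frac{(-1)^i}{i!}$ (the number of permutations of a $j$-element set with no fixed points); equivalently $\frac{e^{-t}}{1-t}=\sum_{j\ge 0}D_j\frac{t^j}{j!}$. Binomial coefficients are the generalized ones: for any real (or integer, possibly negative) $a$ and integer $j\ge 0$, $\binom{a}{j}=\frac{a(a-1)\cdots(a-j+1)}{j!}$, with $\binom{a}{0}=1$; in particular $\binom{-1}{0}=1$. *)

(* Defs.v *)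
From mathcomp Require Import all_boot all_order all_algebra.
Set Implicit Arguments. Unset Strict Implicit. Unset Printing Implicit Defensive.
Import Order.TTheory GRing.Theory Num.Theory.
Local Open Scope ring_scope.

Definition derange (j : nat) : rat :=
  (j`!)%:R * \sum_(i < j.+1) (-1) ^+ i / (i`!)%:R.

Definition gbinom (a : int) (j : nat) : rat :=
  (\prod_(i < j) (a%:~R - i%:R)) / (j`!)%:R.

(* Main.v *)
Require Import Defs.
From mathcomp Require Import all_boot all_order all_algebra.
From mathcomp Require Import zify ring.
Import Order.TTheory GRing.Theory Num.Theory.
Local Open Scope ring_scope.
Lemma prod_ffact (a j : nat) :
  \prod_(i < j) (a%:R - i%:R : rat) = (a ^_ j)%:R.
Proof.
elim: j => [|j IH]; first by rewrite big_ord0 ffactn0.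
rewrite big_ord_recr /= IH ffactnSr natrM.
case: (leqP j a) => hj; first by rewrite natrB.
by rewrite ffact_small // !mul0r.
Qed.

Lemma gbinomE (k j : nat) :
  gbinom (k%:Z + j%:Z - 1) j = ('C((k + j).-1, j))%:R.
Proof.
rewrite /gbinom.
case E: (k + j)%N => [|s].
  have [-> ->] : k = 0%N /\ j = 0%N by lia.
  by rewrite big_ord0 fact0 bin0 divr1.
have -> : k%:Z + j%:Z - 1 = s%:Z.
  by rewrite -PoszD E -addn1 PoszD addrK.
rewrite /=.
have -> : (s%:~R : rat) = s%:R by [].
rewrite prod_ffact -bin_ffact natrM mulfK //.
by rewrite pnatr_eq0 -lt0n fact_gt0.
Qed.

Lemma hockey (k N : nat) :
  \sum_(j < N.+1) ('C((k + j).-1, j))%:R = ('C(k + N, N))%:R :> rat.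
Proof.
rewrite -natr_sum; congr (_%:R).
elim: N => [|N IH]; first by rewrite big_ord1 !bin0.
rewrite big_ord_recr /= IH addnS binS /= addnC.
by [].
Qed.

Lemma stepA (k n : nat) (a : nat -> rat) :
  \sum_(l < n.+1) ('C((k + (n - l)).-1, n - l))%:R * \sum_(i < l.+1) a i
  = \sum_(i < n.+1) a i * ('C(k + (n - i), n - i))%:R.
Proof.
elim: n a => [|n IH] a.
  by rewrite !big_ord1 /= sub0n !bin0 mulrC.
rewrite big_ord_recl /= big_ord_recl big_ord0 addr0 subn0.
under eq_bigr => l _ do rewrite /bump /= subSS big_ord_recl add1n mulrDr.
rewrite big_split /= (IH (fun i => a i.+1)) -mulr_suml [in RHS]big_ord_recl /= subn0.
rewrite addrA; congr (_ + _).
rewrite -mulrDl mulrC; congr (_ * _).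
rewrite (reindex_inj rev_ord_inj) /=.
rewrite (eq_bigr (fun j : 'I_n.+1 => ('C((k + j).-1, j))%:R)); last first.
  move=> j _; have hj : (j <= n)%N by rewrite -ltnS.
  by rewrite subSS subKn.
by rewrite addrC -hockey [in RHS]big_ord_recr /=.
Qed.
Lemma expand1X (N : nat) :
  (1 - 'X : {poly rat}) ^+ N = \sum_(i < N.+1) ((-1) ^+ i * ('C(N, i))%:R) *: 'X^i.
Proof.
rewrite exprDn; apply: eq_bigr => i _.
rewrite expr1n mul1r [in LHS]exprNn -scalerA scaler_nat -mul_polyC polyC_exp polyCN polyC1.
by rewrite mulrnAr.
Qed.

Section Conv.
Variable (B : nat) (h : nat -> rat).
Definition Lf (r : {poly rat}) := \sum_(j < B) r`_j * h j.

Lemma Lf_sum N (F : 'I_N -> {poly rat}) : Lf (\sum_(i < N) F i) = \sum_(i < N) Lf (F i).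
Proof.
rewrite /Lf; under eq_bigr do rewrite coef_sum mulr_suml.
exact: exchange_big.
Qed.

Lemma Lf_scale c r : Lf (c *: r) = c * Lf r.
Proof. by rewrite /Lf mulr_sumr; apply: eq_bigr => j _; rewrite coefZ mulrA. Qed.

Lemma Lf_Xn t : (t < B)%N -> Lf 'X^t = h t.
Proof.
move=> tB; rewrite /Lf (bigD1 (Ordinal tB)) //= coefXn eqxx mul1r big1 ?addr0 //.
move=> j /eqP hj; rewrite coefXn; case: eqP => [e|]; last by rewrite mul0r.
by exfalso; apply: hj; apply: val_inj.
Qed.
End Conv.

Lemma convol (n m : nat) (h : nat -> rat) :
  \sum_(j < (m + n).+1) ((-1) ^+ j * ('C(m + n, j))%:R) * h j =
  \sum_(i < n.+1) \sum_(k < m.+1)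
    ((-1) ^+ i * ('C(n, i))%:R) * ((-1) ^+ k * ('C(m, k))%:R) * h (i + k)%N.
Proof.
have e1 : \sum_(j < (m + n).+1) ((-1) ^+ j * ('C(m + n, j))%:R) * h j
   = Lf (m + n).+1 h ((1 - 'X) ^+ (m + n)).
  rewrite expand1X Lf_sum; apply: eq_bigr => j _.
  by rewrite Lf_scale Lf_Xn.
rewrite e1 addnC exprD !expand1X mulr_suml Lf_sum; apply: eq_bigr => i _.
rewrite mulr_sumr Lf_sum; apply: eq_bigr => k _.
rewrite -scalerAl -scalerAr scalerA -exprD Lf_scale Lf_Xn //.
by have := ltn_ord i; have := ltn_ord k; lia.
Qed.

Theorem theorem2p1 (m n : nat) :
  derange (m + n) / (n`!)%:R =
  \sum_(l < n.+1) \sum_(k < m.+1)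
     gbinom (k%:Z + (n - l)%:Z - 1) (n - l) * ('C(m, k))%:R * (-1) ^+ (m - k)
       * (k`!)%:R / (l`!)%:R * derange l.
Proof.
pose a := fun i : nat => (-1) ^+ i / (i`!)%:R : rat.
have hd : forall l, derange l = (l`!)%:R * \sum_(i < l.+1) a i by [].
have nf : forall j, (j`!)%:R != 0 :> rat by move=> j; rewrite pnatr_eq0 -lt0n fact_gt0.
pose w := fun k : nat => ('C(m, k))%:R * (-1) ^+ (m - k) * (k`!)%:R : rat.
rewrite (eq_bigr (fun l : 'I_n.+1 => \sum_(k < m.+1) w k *
    (('C((k + (n - l)).-1, n - l))%:R * \sum_(i < l.+1) a i))); last first.
  move=> l _; apply: eq_bigr => k _; rewrite gbinomE hd /w.
  by field; apply: nf.
rewrite exchange_big /=.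
rewrite (eq_bigr (fun k : 'I_m.+1 => w k *
    \sum_(i < n.+1) a i * ('C(k + (n - i), n - i))%:R)); last first.
  by move=> k _; rewrite -mulr_sumr stepA.
under eq_bigr do rewrite mulr_sumr.
rewrite exchange_big /=.
pose c := fun i : nat => (-1) ^+ i * ('C(n, i))%:R : rat.
pose d := fun k : nat => (-1) ^+ k * ('C(m, k))%:R : rat.
pose h := fun j : nat => ((m + n - j)`!)%:R : rat.
rewrite (eq_bigr (fun i : 'I_n.+1 => \sum_(k < m.+1)
    (n`!)%:R^-1 * (c i * d k * h (i + k)%N))); last first.
  move=> i _.
  rewrite (reindex_inj rev_ord_inj) /=; apply: eq_bigr => k _.
  have hk : (k <= m)%N by rewrite -ltnS.
  have hi : (i <= n)%N by rewrite -ltnS.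
  rewrite subSS /c /d /h /w /a subKn // bin_sub //.
  have -> : (m + n - (i + k))%N = (m - k + (n - i))%N by lia.
  have F1 := bin_fact (leq_addl (m - k) (n - i)).
  rewrite addnK in F1.
  have F2 := bin_fact hi.
  rewrite -F1 -F2 !natrM.
  have hC : ('C(n, i))%:R != 0 :> rat by rewrite pnatr_eq0 -lt0n bin_gt0.
  by field; rewrite hC !nf.
under eq_bigr do rewrite -mulr_sumr.
rewrite -mulr_sumr -(convol n m h) mulrC; congr (_ * _).
rewrite hd mulr_sumr; apply: eq_bigr => j _.
have hj : (j <= m + n)%N by rewrite -ltnS.
have F := bin_fact hj.
rewrite /a /h -F !natrM.
by field; rewrite !nf.
Qed.
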